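(* Let $m,n>0$, let $f$ and $g$ be concave positive real functions on $[0,m]$ and $[0,n]$ respectively, and let $A=\{(x,y): 0\le x\le m,\ 0\le y\le f(x)\}$ and $B=\{(x,y): 0\le x\le n,\ 0\le y\le g(x)\}$. Let $k\ge1$, let $0=x_0<x_1<\cdots<x_k=m$ and $0=x'_0<x'_1<\cdots<x'_k=n$ be the partitions of $[0,m]$ and $[0,n]$ into $k$ equal parts, and for $i=1,\dots,k$ let $$A_i=\{(x,y): x_{i-1}\le x\le x_i,\ 0\le y\le f(x)\},\qquad B_i=\{(x,y): x'_{i-1}\le x\le x'_i,\ 0\le y\le g(x)\}.$$ If $|A+B|=\left(\frac{|A|}{m}+\frac{|B|}{n}\right)(m+n)$, then for every $i=1,\dots,k$, $$|A_i+B_i|=\left(\frac{|A_i|}{m/k}+\frac{|B_i|}{n/k}\right)\left(\frac{m}{k}+\frac{n}{k}\right).$$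
   Context: $|X|$ denotes area; $A+B$ is the Minkowski sum. *)

(* Defs.v *)
From HB Require Import structures.
From mathcomp Require Import all_boot all_order all_algebra.
From mathcomp Require Import all_classical all_reals all_analysis.
Set Implicit Arguments. Unset Strict Implicit. Unset Printing Implicit Defensive.
Import Order.TTheory GRing.Theory Num.Theory.
Local Open Scope classical_set_scope.
Local Open Scope ring_scope.

(* On (Lebesgue)
   measurable sets, in particular on convex sets, this is the usual area. *)
Definition area (R : realType) (X : set (R * R)) : \bar R :=
  mu_ext (lebesgue_measure \x lebesgue_measure)%E X.

Definition minkowski_sum (R : realType) (A B : set (R * R)) : set (R * R) :=
  [set z | exists a, exists b, A a /\ B b /\ z = (a.1 + b.1, a.2 + b.2)].

Definition concave_on (R : realType) (a b : R) (f : R -> R) : Prop :=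
  forall x y t : R, a <= x <= b -> a <= y <= b -> 0 <= t <= 1 ->
    t * f x + (1 - t) * f y <= f (t * x + (1 - t) * y).

Definition positive_on (R : realType) (a b : R) (f : R -> R) : Prop :=
  forall x : R, a <= x <= b -> 0 < f x.

Definition region_under (R : realType) (a b : R) (f : R -> R) : set (R * R) :=
  [set p | a <= p.1 <= b /\ 0 <= p.2 <= f p.1].

(* Main.v *)
Require Import Defs.
From HB Require Import structures.
From mathcomp Require Import all_boot all_order all_algebra.
From mathcomp Require Import all_classical all_reals all_analysis.
From mathcomp Require Import measurable_realfun.
From mathcomp Require Import ring lra.
Import Order.TTheory GRing.Theory Num.Theory.
Local Open Scope classical_set_scope.
Local Open Scope ring_scope.

Section S1.
Variable R : realType.

Lemma concave_measurable (a b : R) (f : R -> R) :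
  concave_on a b f -> measurable_fun `[a, b] f.
Proof.
move=> cf.
apply: measurability; first exact: measurable_realfun.RGenCInfty.measurableE.
move=> _ [_ [x ->] <-].
apply: measurable_realfun.is_interval_measurable => y1 y2 [/= Hy1 fy1] [/= Hy2 fy2] z /andP[y1z zy2].
move: Hy1 Hy2 fy1 fy2; rewrite !in_itv /= !andbT => /andP[ay1 y1b] /andP[ay2 y2b] fy1 fy2.
have zab : a <= z <= b by apply/andP; split; lra.
split => //.
have [e|ne] := eqVneq y1 y2.
  have -> : z = y1 by lra.
  done.
have lt : y1 < y2 by rewrite lt_neqAle ne /=; lra.
pose t := (y2 - z) / (y2 - y1).
have d0 : y2 - y1 != 0 by rewrite subr_eq0 eq_sym.
have ht : z = t * y1 + (1 - t) * y2 by rewrite /t; field.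
have t0 : 0 <= t by rewrite /t divr_ge0 //; lra.
have t1 : t <= 1 by rewrite /t ler_pdivrMr; lra.
have := cf y1 y2 t (ltac:(by apply/andP; split)) (ltac:(by apply/andP; split))
  (ltac:(by apply/andP; split)).
rewrite -ht => h.
have : t * x + (1 - t) * x <= t * f y1 + (1 - t) * f y2.
  by apply: lerD; apply: ler_wpM2l => //; lra.
lra.
Qed.


Lemma concave_bounded (a b : R) (f : R -> R) :
  concave_on a b f -> positive_on a b f ->
  forall x, a <= x <= b -> f x <= 2 * f ((a + b) / 2).
Proof.
move=> cf pf x /andP[ax xb].
have h := cf x (a + b - x) (1/2) (ltac:(apply/andP; split; lra))
  (ltac:(apply/andP; split; lra)) (ltac:(apply/andP; split; lra)).
have -> : (a + b) / 2 = 1 / 2 * x + (1 - 1 / 2) * (a + b - x) by field.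
have := pf (a + b - x) (ltac:(apply/andP; split; lra)).
lra.
Qed.

Lemma region_measurable (a b : R) (h : R -> R) :
  measurable_fun `[a, b] h -> measurable (region_under a b h).
Proof.
move=> mh.
have mD : measurable (`[a, b] `*` [set: R]) by apply: measurableX.
have mF : measurable_fun (`[a, b] `*` [set: R]) (fun p : R * R => h p.1 - p.2).
  apply: measurable_realfun.measurable_funB.
    apply: (measurable_comp (F := `[a, b])) => //.
      by move=> _ [[u v] [/= Hu _] <-].
    exact: measurable_funTS measurable_fst.
  exact: measurable_funTS measurable_snd.
have := mF mD `[0, +oo[%classic (measurable_itv _).
move=> m1.
have m2 : measurable ([set: R] `*` (`[0, +oo[%classic : set R)) by apply: measurableX.
have -> : region_under a b h =
  (`[a, b] `*` [set: R] `&` (fun p : R * R => h p.1 - p.2) @^-1` `[0, +oo[%classic)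
  `&` ([set: R] `*` (`[0, +oo[%classic : set R)).
  apply/seteqP; split => [[u v] /= [Hu Hv]|[u v] /= [[[Hu _]]]].
    move: Hu Hv; rewrite !in_itv /= !andbT => Hu /andP[v0 vh].
    by split; [split; [|rewrite subr_ge0]|].
  rewrite !in_itv /= !andbT subr_ge0 => hv [_ v0].
  by split => //; apply/andP.
exact: measurableI.
Qed.


Lemma area_region (a b : R) (h : R -> R) :
  measurable_fun `[a, b] h -> (forall x, a <= x <= b -> 0 <= h x) ->
  area (region_under a b h) = (\int[lebesgue_measure]_(x in `[a, b]) (h x)%:E)%E.
Proof.
move=> mh h0.
rewrite /area measurable_mu_extE; last exact: region_measurable.
rewrite /product_measure1 /= integral_mkcond.
apply: eq_integral => x _.
rewrite patchE /=; case: ifPn => [|/negP] xab.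
  have -> : xsection (region_under a b h) x = `[0, h x]%classic.
    apply/seteqP; split => y; rewrite /xsection /region_under /= inE /=.
      by move=> [_ Hy]; rewrite in_itv.
    rewrite in_itv /= => Hy; split => //.
    by move: xab; rewrite inE /= in_itv.
  rewrite lebesgue_measure_itv /= lte_fin.
  move: xab; rewrite inE /= in_itv /= => /h0 hx0.
  case: ltP => [_|hle]; first by rewrite oppr0 adde0.
  have -> : h x = 0 by apply/eqP; rewrite eq_le hle hx0.
  done.
have -> : xsection (region_under a b h) x = set0.
  apply/seteqP; split => y; rewrite /xsection /region_under /= inE /= => //.
  move=> [Hx _]; apply: xab; by rewrite inE /= in_itv.
by rewrite measure0.
Qed.


Lemma lebesgue_scale (c : R) (c0 : 0 < c) (A : set R) : measurable A ->
  lebesgue_measure A = (c%:E * lebesgue_measure (( *%R c) @^-1` A))%E.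
Proof.
move=> mA.
have mphi : @measurable_fun _ _ (measurableTypeR R) (measurableTypeR R) [set: R] ( *%R c : R -> R) :=
  @measurable_realfun.mulrl_measurable R _ c.
pose nu := measure_function_pushforward__canonical__measure_function_Measure
  (@lebesgue_measure R) mphi.
have := @lebesgue_measure_unique R (mscale (NngNum (ltW c0)) nu) _ A mA.
apply => _ [[u v] _ <-].
transitivity (c%:E * lebesgue_measure (( *%R c) @^-1` `]u, v]%classic))%E; last by [].
have -> : ( *%R c) @^-1` `]u, v]%classic = `]u / c, v / c]%classic.
  apply/seteqP; split => x; rewrite /= !in_itv /=.
    by move=> /andP[ux xv]; rewrite ltr_pdivrMr // ler_pdivlMr // ![x * c]mulrC ux xv.
  by rewrite ltr_pdivrMr // ler_pdivlMr // ![x * c]mulrC.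
rewrite !lebesgue_measure_itv /= !lte_fin ltr_pM2r ?invr_gt0 //.
case: ltP => _; last by rewrite mule0.
rewrite -!EFinD -EFinM; congr (_%:E); field.
by rewrite gt_eqF.
Qed.


Lemma integral_scale (c a b : R) (F : R -> R) : 0 < c ->
  measurable_fun `[c * a, c * b] F ->
  (forall x, c * a <= x <= c * b -> 0 <= F x) ->
  (\int[lebesgue_measure]_(x in `[a, b]) (F (GRing.mul c x))%:E =
   (c^-1)%R%:E * \int[lebesgue_measure]_(x in `[(c * a)%R, (c * b)%R]) (F x)%:E)%E.
Proof.
move=> c0 mF F0.
have mphi : @measurable_fun _ _ (measurableTypeR R) (measurableTypeR R)
  [set: R] ( *%R c : R -> R) := @measurable_realfun.mulrl_measurable R _ c.
pose nu := measure_function_pushforward__canonical__measure_function_Measure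
  (@lebesgue_measure R) mphi.
have mD : measurable (`[c * a, c * b]%classic : set R) by [].
have mF' : measurable_fun (`[c * a, c * b]%classic : set R) (EFin \o F).
  exact/measurable_EFinP.
have F0' : forall x, `[c * a, c * b]%classic x -> (0 <= (F x)%:E)%E.
  by move=> x; rewrite /= in_itv /= lee_fin => /F0.
have E1 : (\int[lebesgue_measure]_(x in `[(c * a)%R, (c * b)%R]) (F x)%:E =
    \int[mscale (NngNum (ltW c0)) nu]_(x in `[(c * a)%R, (c * b)%R]) (F x)%:E)%E.
  by apply: eq_measure_integral => A mA _; exact: lebesgue_scale.
rewrite E1 ge0_integral_mscale //=.
rewrite ge0_integral_pushforward //; last by move=> x /set_mem /F0'.
have -> : ( *%R c) @^-1` `[c * a, c * b]%classic = `[a, b]%classic.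
  apply/seteqP; split => x; rewrite /= !in_itv /= !ler_pM2l //.
rewrite muleA -EFinM mulVf ?gt_eqF // mul1e.
by [].
Qed.


End S1.

Section S2.
Variable R : realType.
Lemma integral_fin (a b M : R) (h : R -> R) :
  measurable_fun `[a, b] h -> (forall x, a <= x <= b -> 0 <= h x <= M) ->
  (\int[lebesgue_measure]_(x in `[a, b]) (h x)%:E)%E \is a fin_num.
Proof.
move=> mh hM.
have mD : measurable (`[a, b]%classic : set R) by [].
rewrite ge0_fin_numE; last first.
  apply: integral_ge0 => x; rewrite /= in_itv /= => /hM /andP[+ _].
  by rewrite lee_fin.
apply: (@le_lt_trans _ _ (\int[lebesgue_measure]_(x in `[a, b]) (cst M%:E) x)%E).
  apply: ge0_le_integral => //.
  - by move=> x; rewrite /= in_itv /= => /hM /andP[+ _]; rewrite lee_fin.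
  - exact/measurable_EFinP.
  - by move=> x; rewrite /= in_itv /= => /hM /andP[_ +]; rewrite lee_fin.
rewrite integral_cst //= lebesgue_measure_itv /=.
by case: ifP => _; rewrite ?mule0 // -EFinD -EFinM ltry.
Qed.

Lemma area_split (X S : set (R * R)) :
  measurable S -> (area X = area (X `&` S) + area (X `&` ~` S))%E.
Proof.
move=> mS; rewrite /area.
have h := caratheodory_measurable_mu_ext (lebesgue_measure \x lebesgue_measure)%E mS.
exact: h.
Qed.

Lemma area_le (X Y : set (R * R)) : X `<=` Y -> (area X <= area Y)%E.
Proof. by move=> XY; apply: le_mu_ext. Qed.

Lemma area_ge0 (X : set (R * R)) : (0 <= area X)%E.
Proof. exact: mu_ext_ge0. Qed.


Lemma sub_mink (a b a' b' u v al be : R) (f g : R -> R) :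
  0 <= al -> 0 <= be -> al + be = 1 ->
  a <= al * u -> al * v <= b -> a' <= be * u -> be * v <= b' ->
  (forall x, a <= x <= b -> 0 <= f x) -> (forall x, a' <= x <= b' -> 0 <= g x) ->
  region_under u v (fun z => f (al * z) + g (be * z)) `<=`
  minkowski_sum (region_under a b f) (region_under a' b' g).
Proof.
move=> al0 be0 ab1 au av bu bv f0 g0 [z w] /= [/andP[uz zv] /andP[w0 wH]].
have az : a <= al * z <= b.
  apply/andP; split; first by apply: (le_trans au); rewrite ler_wpM2l.
  by apply: le_trans av; rewrite ler_wpM2l.
have bz : a' <= be * z <= b'.
  apply/andP; split; first by apply: (le_trans bu); rewrite ler_wpM2l.
  by apply: le_trans bv; rewrite ler_wpM2l.
have fz := f0 _ az; have gz := g0 _ bz.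
have ez : z = al * z + be * z by rewrite -mulrDl ab1 mul1r.
have [hw|hw] := leP w (f (al * z)).
  exists (al * z, w), (be * z, 0); split; [|split].
  - by split => //=; apply/andP.
  - by split => //=; apply/andP; split.
  - by rewrite /= addr0 -ez.
exists (al * z, f (al * z)), (be * z, w - f (al * z)); split; [|split].
- by split => //=; apply/andP; split.
- split => //=; apply/andP; split; move: wH hw => /= wH hw; lra.
- by rewrite /= -ez [f _ + _]addrC subrK.
Qed.

Lemma fin_bound (e : \bar R) r : (0 <= e)%E -> (e <= r%:E)%E -> e = (fine e)%:E.
Proof.
move=> e0 er; rewrite fineK // ge0_fin_numE //.
exact: (le_lt_trans er (ltry _)).
Qed.

Lemma measurable_scale_comp (u v al : R) (f : R -> R) : 0 < al ->
  measurable_fun `[al * u, al * v] f ->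
  measurable_fun `[u, v] (fun z => f (al * z)).
Proof.
move=> al0 mf.
apply: (measurable_comp (F := `[al * u, al * v]%classic)) => //.
  move=> _ [z /= + <-]; rewrite !in_itv /= => /andP[uz zv].
  by rewrite !ler_pM2l // uz zv.
Qed.

Lemma area_regionH (u v al be : R) (f g : R -> R) : 0 < al -> 0 < be ->
  measurable_fun `[al * u, al * v] f -> measurable_fun `[be * u, be * v] g ->
  (forall x, al * u <= x <= al * v -> 0 <= f x) ->
  (forall x, be * u <= x <= be * v -> 0 <= g x) ->
  area (region_under u v (fun z => f (al * z) + g (be * z))) =
  ((al^-1)%:E * \int[lebesgue_measure]_(x in `[(al * u)%R, (al * v)%R]) (f x)%:E +
   (be^-1)%:E * \int[lebesgue_measure]_(x in `[(be * u)%R, (be * v)%R]) (g x)%:E)%E.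
Proof.
move=> al0 be0 mf mg f0 g0.
have mf' := measurable_scale_comp _ _ _ _ al0 mf.
have mg' := measurable_scale_comp _ _ _ _ be0 mg.
have f0' : forall z, u <= z <= v -> 0 <= f (al * z).
  by move=> z /andP[uz zv]; apply: f0; rewrite !ler_pM2l // uz zv.
have g0' : forall z, u <= z <= v -> 0 <= g (be * z).
  by move=> z /andP[uz zv]; apply: g0; rewrite !ler_pM2l // uz zv.
rewrite area_region; last first.
- by move=> z /[dup] /f0' ? /g0' ?; rewrite addr_ge0.
- exact: measurable_funD.
under eq_integral do rewrite EFinD.
rewrite ge0_integralD //.
  by rewrite (@integral_scale R al u v f) // (@integral_scale R be u v g).
all: try (exact/measurable_EFinP).
all: try (by move=> z; rewrite /= in_itv /= lee_fin => /f0').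
all: try (by move=> z; rewrite /= in_itv /= lee_fin => /g0').
Qed.

End S2.

Lemma final_ineq (R : realType) (X W Y Z : \bar R) (T L : R) :
  (0 <= X)%E -> (0 <= W)%E -> (0 <= Y)%E -> (0 <= Z)%E ->
  (W + Y = T%:E)%E -> (T%:E = L%:E + Z)%E ->
  (X <= W)%E -> (Z <= Y)%E -> (L%:E <= X)%E -> X = L%:E.
Proof.
move=> X0 W0 Y0 Z0 eWY eTZ XW ZY LX.
have WT : (W <= T%:E)%E by rewrite -eWY leeDl.
have YT : (Y <= T%:E)%E by rewrite -eWY leeDr.
have hW := fin_bound R W T W0 WT.
have hY := fin_bound R Y T Y0 YT.
have hX := fin_bound R X T X0 (le_trans XW WT).
have hZ := fin_bound R Z T Z0 (le_trans ZY YT).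
move: eWY eTZ XW ZY LX X0 W0 Y0 Z0.
rewrite hW hY hX hZ -!EFinD !lee_fin.
move=> e1 e2 h1 h2 h3 h4 h5 h6 h7.
have {}e1 := EFin_inj e1.
have {}e2 := EFin_inj e2.
congr (_%:E); lra.
Qed.
Theorem lemma4p6 (R : realType) (m n : R) (f g : R -> R) (k : nat) :
  0 < m -> 0 < n ->
  concave_on 0 m f -> positive_on 0 m f ->
  concave_on 0 n g -> positive_on 0 n g ->
  (1 <= k)%N ->
  area (minkowski_sum (region_under 0 m f) (region_under 0 n g)) =
    ((area (region_under 0 m f) * (m^-1)%:E
      + area (region_under 0 n g) * (n^-1)%:E) * (m + n)%:E)%E ->
  forall i : nat, (1 <= i <= k)%N ->
    let xl  := (i.-1)%:R * m / k%:R in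
    let xr  := i%:R * m / k%:R in
    let xl' := (i.-1)%:R * n / k%:R in
    let xr' := i%:R * n / k%:R in
    area (minkowski_sum (region_under xl xr f) (region_under xl' xr' g)) =
      ((area (region_under xl xr f) * ((m / k%:R)^-1)%:E
        + area (region_under xl' xr' g) * ((n / k%:R)^-1)%:E)
       * (m / k%:R + n / k%:R)%:E)%E.
Proof.
move=> m0 n0 cf pf cg pg k1 hyp i /andP[i1 ik] xl xr xl' xr'.
have K0 : 0 < k%:R :> R by rewrite ltr0n.
have Kne : k%:R != 0 :> R by rewrite gt_eqF.
have mne : m != 0 by rewrite gt_eqF.
have nne : n != 0 by rewrite gt_eqF.
pose s := m + n.
have s0 : 0 < s by rewrite /s; lra.
have sne : s != 0 by rewrite gt_eqF.
pose al := m / s; pose be := n / s.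
have al0 : 0 < al by rewrite divr_gt0.
have be0 : 0 < be by rewrite divr_gt0.
pose tl := (i.-1)%:R / k%:R : R; pose tr := i%:R / k%:R : R.
have tl0 : 0 <= tl by rewrite divr_ge0.
have tlr : tl <= tr.
  rewrite /tl /tr ler_wpM2r // ?invr_ge0 ?ler0n // ler_nat; exact: leq_pred.
have tr1 : tr <= 1 by rewrite /tr ler_pdivrMr // mul1r ler_nat.
have exl : xl = tl * m by rewrite /xl /tl mulrAC.
have exr : xr = tr * m by rewrite /xr /tr mulrAC.
have exl' : xl' = tl * n by rewrite /xl' /tl mulrAC.
have exr' : xr' = tr * n by rewrite /xr' /tr mulrAC.
pose p := xl + xl'; pose q := xr + xr'.
have hp : al * p = xl by rewrite /p exl exl' /al /s; field; rewrite -/s.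
have hq : al * q = xr by rewrite /q exr exr' /al /s; field; rewrite -/s.
have hp' : be * p = xl' by rewrite /p exl exl' /be /s; field; rewrite -/s.
have hq' : be * q = xr' by rewrite /q exr exr' /be /s; field; rewrite -/s.
have hs : al * s = m by rewrite /al /s; field; rewrite -/s.
have hs' : be * s = n by rewrite /be /s; field; rewrite -/s.
have albe : al + be = 1 by rewrite /al /be -mulrDl divff.
have b1 : 0 <= xl by rewrite exl; nra.
have b2 : xl <= xr by rewrite exl exr; nra.
have b3 : xr <= m by rewrite exr; nra.
have b1' : 0 <= xl' by rewrite exl'; nra.
have b2' : xl' <= xr' by rewrite exl' exr'; nra.
have b3' : xr' <= n by rewrite exr'; nra.
have mf := concave_measurable R 0 m f cf.
have mg := concave_measurable R 0 n g cg.
have f0 : forall x, 0 <= x <= m -> 0 <= f x by move=> x /pf /ltW.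
have g0 : forall x, 0 <= x <= n -> 0 <= g x by move=> x /pg /ltW.
have fM : forall x, 0 <= x <= m -> 0 <= f x <= 2 * f ((0 + m) / 2).
  by move=> x hx; rewrite f0 //=; exact: concave_bounded.
have gM : forall x, 0 <= x <= n -> 0 <= g x <= 2 * g ((0 + n) / 2).
  by move=> x hx; rewrite g0 //=; exact: concave_bounded.
have sub1 : `[xl, xr] `<=` (`[0, m] : set R).
  by move=> x; rewrite /= !in_itv /= => /andP[? ?]; apply/andP; split; lra.
have sub2 : `[xl', xr'] `<=` (`[0, n] : set R).
  by move=> x; rewrite /= !in_itv /= => /andP[? ?]; apply/andP; split; lra.
have mfi : measurable_fun `[xl, xr] f by apply: measurable_funS mf.
have mgi : measurable_fun `[xl', xr'] g by apply: measurable_funS mg.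
have f0i : forall x, xl <= x <= xr -> 0 <= f x.
  by move=> x hx; apply: f0; have := sub1 x; rewrite /= !in_itv; apply.
have g0i : forall x, xl' <= x <= xr' -> 0 <= g x.
  by move=> x hx; apply: g0; have := sub2 x; rewrite /= !in_itv; apply.
have fMi : forall x, xl <= x <= xr -> 0 <= f x <= 2 * f ((0 + m) / 2).
  by move=> x hx; apply: fM; have := sub1 x; rewrite /= !in_itv; apply.
have gMi : forall x, xl' <= x <= xr' -> 0 <= g x <= 2 * g ((0 + n) / 2).
  by move=> x hx; apply: gM; have := sub2 x; rewrite /= !in_itv; apply.
have finA := integral_fin R 0 m _ f mf fM.
have finB := integral_fin R 0 n _ g mg gM.
have finAi := integral_fin R xl xr _ f mfi fMi.
have finBi := integral_fin R xl' xr' _ g mgi gMi.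
have aA := area_region R 0 m f mf f0.
have aB := area_region R 0 n g mg g0.
have aAi := area_region R xl xr f mfi f0i.
have aBi := area_region R xl' xr' g mgi g0i.
have aC := area_regionH R 0 s al be f g al0 be0.
rewrite !mulr0 hs hs' in aC.
have {}aC := aC mf mg f0 g0.
have aCS := area_regionH R p q al be f g al0 be0.
rewrite hp hq hp' hq' in aCS.
have {}aCS := aCS mfi mgi f0i g0i.
pose S := (`[p, q]%classic : set R) `*` [set: R].
have mS : measurable S by apply: measurableX.
pose H := fun z => f (al * z) + g (be * z).
have p0 : 0 <= p by rewrite /p; lra.
have qs : q <= s by rewrite /q /s; lra.
have pq : p <= q by rewrite /p /q; lra.
have CsubAB : region_under 0 s H `<=`
    minkowski_sum (region_under 0 m f) (region_under 0 n g).
  apply: (sub_mink R 0 m 0 n 0 s al be f g (ltW al0) (ltW be0) albe) => //.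
  - by rewrite mulr0.
  - by rewrite hs.
  - by rewrite mulr0.
  - by rewrite hs'.
have PQsub : region_under p q H `<=`
    minkowski_sum (region_under xl xr f) (region_under xl' xr' g).
  apply: (sub_mink R xl xr xl' xr' p q al be f g (ltW al0) (ltW be0) albe) => //.
  - by rewrite hp.
  - by rewrite hq.
  - by rewrite hp'.
  - by rewrite hq'.
have AiBi_sub : minkowski_sum (region_under xl xr f) (region_under xl' xr' g) `<=`
    minkowski_sum (region_under 0 m f) (region_under 0 n g) `&` S.
  move=> z [u [v [[/andP[u1 u2] Hu] [[/andP[v1 v2] Hv] ->]]]].
  split.
    exists u, v; split; [|split] => //.
      by split => //; apply/andP; split; lra.
    by split => //; apply/andP; split; lra.
  split => //=; rewrite in_itv /=; apply/andP; split; rewrite /p /q; lra.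
have CS_eq : region_under 0 s H `&` S = region_under p q H.
  apply/seteqP; split => -[z w] /=.
    by move=> [[_ Hw] [Hz _]]; split => //; move: Hz; rewrite in_itv.
  move=> [/andP[Hz1 Hz2] Hw]; split; split => //.
    by apply/andP; split; lra.
  first [ by rewrite in_itv /= Hz1 Hz2
        | by apply/mem_set; rewrite in_itv /= Hz1 Hz2
        | by rewrite /= in_itv /= Hz1 Hz2
        | by apply/andP; split
        | by rewrite inE /= in_itv /= Hz1 Hz2 ].
have e1 := area_split R (minkowski_sum (region_under 0 m f) (region_under 0 n g)) S mS.
have e2 := area_split R (region_under 0 s H) S mS.
rewrite CS_eq in e2.
have [ja eja] : exists r : R,
    (\int[lebesgue_measure]_(x in `[0%R, m]) (f x)%:E)%E = r%:E :=
  ex_intro _ _ (esym (fineK finA)).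
have [jb ejb] : exists r : R,
    (\int[lebesgue_measure]_(x in `[0%R, n]) (g x)%:E)%E = r%:E :=
  ex_intro _ _ (esym (fineK finB)).
have [jai ejai] : exists r : R,
    (\int[lebesgue_measure]_(x in `[xl, xr]) (f x)%:E)%E = r%:E :=
  ex_intro _ _ (esym (fineK finAi)).
have [jbi ejbi] : exists r : R,
    (\int[lebesgue_measure]_(x in `[xl', xr']) (g x)%:E)%E = r%:E :=
  ex_intro _ _ (esym (fineK finBi)).
rewrite eja ejb in aC.
rewrite ejai ejbi in aCS.
rewrite eja in aA; rewrite ejb in aB; rewrite ejai in aAi; rewrite ejbi in aBi.
pose T := al^-1 * ja + be^-1 * jb.
pose L := al^-1 * jai + be^-1 * jbi.
have eC : area (region_under 0 s H) = T%:E by rewrite aC -!EFinM -EFinD.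
have eCS : area (region_under p q H) = L%:E by rewrite aCS -!EFinM -EFinD.
rewrite aAi aBi -!EFinM.
have sne' : m + n != 0 by rewrite gt_eqF // addr_gt0.
have -> : (jai * (m / k%:R)^-1 + jbi * (n / k%:R)^-1) * (m / k%:R + n / k%:R) = L.
  by rewrite /L /al /be /s; field; rewrite ?sne' ?mne ?nne ?Kne.
apply: (final_ineq R _
  (area (minkowski_sum (region_under 0 m f) (region_under 0 n g) `&` S))
  (area (minkowski_sum (region_under 0 m f) (region_under 0 n g) `&` ~` S))
  (area (region_under 0 s H `&` ~` S)) T L).
- exact: area_ge0.
- exact: area_ge0.
- exact: area_ge0.
- exact: area_ge0.
- rewrite -e1 hyp aA aB -!EFinM -?EFinD -?EFinM; congr (_%:E).
  by rewrite /T /al /be /s; field; rewrite ?sne' ?mne ?nne ?Kne.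
- by rewrite -eC e2 eCS.
- exact: area_le AiBi_sub.
- by apply: area_le => z [/CsubAB ? ?]; split.
- by rewrite -eCS; apply: area_le.
Qed.
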